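(* Let $p$ be an admissible linear order on $\mathcal A$ and $I\subset\mathcal A$ an interval with respect to $p$. Let $\mathcal A^*$ be the amalgamation of $\mathcal A$ obtained by shrinking $I$ to a single new letter $z$, declared to belong to $L_e$ and placed in the position of $I$ in the order (all other letters and their order unchanged), and for $w\in\mathcal A^n$ let $w^*\in(\mathcal A^* )^n$ be obtained by replacing every letter of $w$ lying in $I$ by $z$. Then for every $w\in\mathcal A^n$ and every $k\ge1$, $$\sum_{i=1}^k\lambda_i(\phi_p(w))\le\sum_{i=1}^k\lambda_i(\phi_p^*(w^* )),$$ where $\phi_p^*$ is the generalised RSK shape map for the alphabet $\mathcal A^*$ with the induced order and $\lambda_i(\cdot)$ denotes the length of the $i$-th row. In particular, if $\mathcal P^*$ denotes the parameters of $\mathcal A^*$ (with $z$ having mass $\mu_1(I)$), then $\sum_{i=1}^k\lambda_i^{\mathcal P}(n)\le\sum_{i=1}^k\lambda_i^{\mathcal P^*}(n)$ pointwise on $(\mathcal A^n,\mu_n)$.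
   Context: Alphabet: $\mathcal A=L_e\sqcup L_o\sqcup G$ where $L_e=\{x_1,x_2,\dots\}$, $L_o=\{y_1,y_2,\dots\}$ are discrete and $G$ is identified with an interval of $\mathbb R$; $\mu_1$, $\mu_n=\mu_1^{\otimes n}$ are the measures with $\mu_1(\{x_i\})=\alpha_i$, $\mu_1(\{y_j\})=\beta_j$, and $\gamma$ times normalized Lebesgue measure on $G$, for Thoma parameters $\mathcal P$. An admissible order is a linear order $p$ on $\mathcal A$ for which $G$ is an interval (if $a_1<a<a_2$ with $a_1,a_2\in G$ then $a\in G$) and whose restriction to $G$ is the usual order of reals or its reverse. A subset $I\subset\mathcal A$ is an interval w.r.t. $p$ if $a_1,a_2\in I$, $a_1<a<a_2$ imply $a\in I$. Generalised RSK (row insertion) w.r.t. $p$: an $\mathcal A_p$-tableau is a Young diagram filled with letters of $\mathcal A$. To insert a letter $x$ into a tableau $T$: in the first row, if $x\in L_e$ find the leftmost entry strictly greater than $x$; if $x\in L_o\cup G$ find the leftmost entry greater than or equal to $x$; if there is none, append $x$ at the end of the row and stop; otherwise $x$ replaces that entry and the replaced entry is inserted into the second row by the same rule, and so on (an entry bumped out of the last row forms a new row). For $w=z_1\cdots z_n$, $R(w)$ is obtained by inserting $z_1,z_2,\dots,z_n$ successively into the empty tableau, and $\phi_p(w)\in\mathbb Y_n$ is the shape of $R(w)$. $\lambda_i^{\mathcal P}(n)(w):=\lambda_i(\phi_p(w))$. *)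

(* Defs.v *)
From Stdlib Require Import Reals List Arith ClassicalEpsilon.
Import ListNotations.
Open Scope R_scope.

Definition decb (P : Prop) : bool :=
  if excluded_middle_informative P then true else false.

(* Le i = x_{i+1}, Lo j = y_{j+1}, Gl r = the point r of G = [0,1]. *)
Inductive letter : Type :=
| Le : nat -> letter
| Lo : nat -> letter
| Gl : {r : R | 0 <= r <= 1} -> letter.

Definition isG (a : letter) : Prop :=
  match a with Gl _ => True | _ => False end.

(* strict-bump letters (those of L_e) *)
Definition isLe (a : letter) : bool :=
  match a with Le _ => true | _ => false end.

(* p a b = true means a < b in the linear order p. *)
Definition strict_linear_order {X : Type} (p : X -> X -> bool) : Prop :=
  (forall a, p a a = false) /\
  (forall a b c, p a b = true -> p b c = true -> p a c = true) /\
  (forall a b, a <> b -> p a b = true \/ p b a = true).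

Definition admissible (p : letter -> letter -> bool) : Prop :=
  strict_linear_order p /\
  (forall a1 a a2, isG a1 -> isG a2 -> p a1 a = true -> p a a2 = true -> isG a) /\
  ((forall r s, p (Gl r) (Gl s) = true <-> proj1_sig r < proj1_sig s) \/
   (forall r s, p (Gl r) (Gl s) = true <-> proj1_sig s < proj1_sig r)).

Definition is_interval {X : Type} (p : X -> X -> bool) (I : X -> bool) : Prop :=
  forall a1 a a2, I a1 = true -> I a2 = true -> p a1 a = true -> p a a2 = true ->
    I a = true.

Section RSK.
Variable X : Type.
Variable lt : X -> X -> bool.
Variable strict : X -> bool.       (* true for letters of L_e *)

Definition bumps (x e : X) : bool :=
  if strict x then lt x e else negb (lt e x).

Fixpoint row_ins (x : X) (r : list X) : option X * list X :=
  match r with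
  | nil => (None, [x])
  | e :: r' =>
      if bumps x e then (Some e, x :: r')
      else let (o, r'') := row_ins x r' in (o, e :: r'')
  end.

Fixpoint tab_ins (x : X) (t : list (list X)) : list (list X) :=
  match t with
  | nil => [[x]]
  | r :: t' =>
      match row_ins x r with
      | (None, r') => r' :: t'
      | (Some y, r') => r' :: tab_ins y t'
      end
  end.

Definition RSK (w : list X) : list (list X) :=
  fold_left (fun t x => tab_ins x t) w nil.

Definition shape (w : list X) : list nat := map (@length X) (RSK w).
End RSK.

Arguments RSK {X} lt strict w.
Arguments shape {X} lt strict w.

(* lambda_1 + ... + lambda_k of a shape (rows beyond the last are 0) *)
Definition partsum (k : nat) (sh : list nat) : nat :=
  fold_right Nat.add 0%nat (firstn k sh).

(* None is the new letter z; Some a is a letter a of A not in I. *)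
Definition star_lt (p : letter -> letter -> bool) (I : letter -> bool)
  (a b : option letter) : bool :=
  match a, b with
  | Some a, Some b => p a b
  | None, None => false
  | None, Some b => decb (exists c, I c = true /\ p c b = true)
  | Some a, None => decb (exists c, I c = true /\ p a c = true)
  end.

Definition star_strict (a : option letter) : bool :=
  match a with None => true | Some a => isLe a end.

Definition star_word (I : letter -> bool) (w : list letter) : list (option letter) :=
  map (fun a => if I a then None else Some a) w.

(* Main.v *)
Require Import Defs.
From Stdlib Require Import Reals List Arith ClassicalEpsilon.
From Stdlib Require Import Lia Classical Eqdep_dec Bool.
Import ListNotations.
Local Open Scope nat_scope.


Section PW.
Variable A : Type.
Inductive pw (P : A -> A -> Prop) : list A -> Prop :=
| pw_nil : pw P []
| pw_cons a l : (forall b, In b l -> P a b) -> pw P l -> pw P (a :: l).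

Lemma pw_app P l1 l2 : pw P (l1 ++ l2) <->
  pw P l1 /\ pw P l2 /\ (forall a b, In a l1 -> In b l2 -> P a b).
Proof.
  induction l1 as [|x l1 IH]; simpl.
  - split; [intros H; repeat split; auto; [constructor|tauto] | tauto].
  - split.
    + intros H; inversion H as [|? ? Hx Hr]; subst. apply IH in Hr as (H1 & H2' & H4).
      repeat split; auto.
      * constructor; auto. intros b Hb; apply Hx; apply in_or_app; auto.
      * intros a b [<-|Ha] Hb; auto. apply Hx; apply in_or_app; auto.
    + intros (H1 & H2 & H3). inversion H1; subst. constructor.
      * intros b Hb; apply in_app_or in Hb as [Hb|Hb]; auto.
      * apply IH; repeat split; auto.
Qed.

Lemma pw_app3 P l1 M l3 : pw P (l1 ++ M ++ l3) <->
  pw P l1 /\ pw P M /\ pw P l3 /\ (forall a b, In a l1 -> In b M -> P a b)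
  /\ (forall a b, In a l1 -> In b l3 -> P a b) /\ (forall a b, In a M -> In b l3 -> P a b).
Proof.
  rewrite pw_app, pw_app. split.
  - intros (H1 & (H2 & H3 & H4) & H5). repeat split; auto;
    intros a b Ha Hb; apply H5; auto; apply in_or_app; auto.
  - intros (H1 & H2 & H3 & H4 & H5 & H6). repeat split; auto.
    intros a b Ha Hb; apply in_app_or in Hb as [Hb|Hb]; auto.
Qed.

Inductive sub : list A -> list A -> Prop :=
| sub_nil : sub [] []
| sub_skip a l l' : sub l l' -> sub l (a :: l')
| sub_keep a l l' : sub l l' -> sub (a :: l) (a :: l').

Lemma sub_refl l : sub l l.
Proof. induction l; [constructor|apply sub_keep; auto]. Qed.
Lemma sub_incl l l' : sub l l' -> incl l l'.
Proof. induction 1; intros x Hx; simpl in *; auto. destruct Hx; auto. Qed.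
Lemma sub_app l1 l1' l2 l2' : sub l1 l1' -> sub l2 l2' -> sub (l1 ++ l2) (l1' ++ l2').
Proof. induction 1; intros; simpl; auto; [apply sub_skip|apply sub_keep]; auto. Qed.
Lemma sub_pw P l l' : sub l l' -> pw P l' -> pw P l.
Proof.
  induction 1 as [|a l l' Hs IH|a l l' Hs IH]; intros Hp; auto. inversion Hp; auto.
  inversion Hp as [|? ? Hx Hr]; subst; constructor; auto. intros b Hb; apply Hx; eapply sub_incl; eauto.
Qed.
End PW.
Arguments pw {A}. Arguments sub {A}.


Section Gen.
Variable X : Type.
Variable lt : X -> X -> bool.
Variable strict : X -> bool.
Definition Rl (a b : X) : Prop := bumps X lt strict b a = false.
Hypothesis Rtr : forall a b c, Rl a b -> Rl b c -> Rl a c.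
Hypothesis nRtr : forall a b c, ~Rl a b -> ~Rl b c -> ~Rl a c.

Lemma Rdec a b : Rl a b \/ ~ Rl a b.
Proof. unfold Rl. destruct (bumps X lt strict b a); [right; discriminate|left; auto]. Qed.
Lemma nR_bumps a b : ~ Rl a b <-> bumps X lt strict b a = true.
Proof. unfold Rl. destruct (bumps X lt strict b a); intuition congruence. Qed.

Lemma L1 p a c : Rl p c -> ~Rl a c -> Rl p a.
Proof. intros H1 H2. destruct (Rdec p a) as [|H]; auto. exfalso; exact (nRtr p a c H H2 H1). Qed.
Lemma L2 a c d : ~Rl a c -> Rl a d -> Rl c d.
Proof. intros H1 H2. destruct (Rdec c d) as [|H]; auto. exfalso; exact (nRtr a c d H1 H H2). Qed.

Definition chain := pw Rl.

Lemma row_ins_some x r y r' : row_ins X lt strict x r = (Some y, r') ->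
  exists u v, r = u ++ y :: v /\ r' = u ++ x :: v /\ (forall e, In e u -> Rl e x) /\ ~ Rl y x.
Proof.
  revert r'; induction r as [|e r IH]; simpl; intros r' H; [discriminate|].
  destruct (bumps X lt strict x e) eqn:E.
  - injection H as <- <-. exists [], r. repeat split; auto. simpl; tauto.
    apply nR_bumps; auto.
  - destruct (row_ins X lt strict x r) as [o r''] eqn:E2. injection H as -> <-.
    destruct (IH _ eq_refl) as (u & v & -> & -> & H1 & H2).
    exists (e :: u), v. repeat split; auto. intros e' [<-|He]; auto.
Qed.

Lemma row_ins_none x r r' : row_ins X lt strict x r = (None, r') ->
  r' = r ++ [x] /\ forall e, In e r -> Rl e x.
Proof.
  revert r'; induction r as [|e r IH]; simpl; intros r' H.
  - injection H as <-. split; auto. tauto.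
  - destruct (bumps X lt strict x e) eqn:E; [discriminate|].
    destruct (row_ins X lt strict x r) as [o r''] eqn:E2. injection H as -> <-.
    destruct (IH _ eq_refl) as [-> H1]. split; auto. intros e' [<-|He]; auto.
Qed.

Lemma chain_ins x r o r' : chain r -> row_ins X lt strict x r = (o, r') -> chain r'.
Proof.
  intros Hc H. destruct o as [y|].
  - destruct (row_ins_some _ _ _ _ H) as (u & v & -> & -> & H1 & H2).
    unfold chain in *. apply (pw_app3 _ _ u [y] v) in Hc.
    apply (pw_app3 _ _ u [x] v).
    destruct Hc as (A1 & A2 & A3 & A4 & A5 & A6).
    split; [auto|split; [|split; [auto|split; [|split; [auto|]]]]].
    + constructor; [simpl; tauto|constructor].
    + intros a b Ha [<-|[]]; auto.
    + intros a b [<-|[]] Hb. eapply L2; eauto. apply (A6 y b); simpl; auto.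
  - destruct (row_ins_none _ _ _ H) as [-> H1]. unfold chain in *.
    apply pw_app; split; [auto|split]. constructor; [simpl; tauto|constructor].
    intros a b Ha [<-|[]]; auto.
Qed.

Lemma row_ins_in x r o r' : row_ins X lt strict x r = (o, r') ->
  (forall e, In e r' -> e = x \/ In e r) /\ (forall y, o = Some y -> In y r).
Proof.
  intros H. destruct o as [y|].
  - destruct (row_ins_some _ _ _ _ H) as (u & v & -> & -> & H1 & H2).
    split; [|intros ? [=<-]; apply in_or_app; simpl; auto].
    intros e He; apply in_app_or in He as [He|[He|He]]; auto; right; apply in_or_app; simpl; auto.
  - destruct (row_ins_none _ _ _ H) as [-> H1]. split; [|discriminate].
    intros e He; apply in_app_or in He as [He|[He|[]]]; auto.
Qed.

Fixpoint below (l u : list X) : Prop :=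
  match l, u with
  | [], _ => True
  | a :: l', b :: u' => ~ Rl a b /\ below l' u'
  | _ :: _, [] => False
  end.

Definition hd_row (t : list (list X)) := match t with [] => [] | r :: _ => r end.

Fixpoint valid (t : list (list X)) : Prop :=
  match t with
  | [] => True
  | r :: t' => chain r /\ below (hd_row t') r /\ valid t'
  end.

Lemma below_app l u x : below l u -> below l (u ++ [x]).
Proof.
  revert u; induction l as [|a l IH]; intros [|b u]; simpl; try tauto.
  intros [H1 H2]; auto.
Qed.

Lemma below_ins_same l u x y u' : below l u -> row_ins X lt strict x u = (Some y, u') -> below l u'.
Proof.
  intros Hb H. destruct (row_ins_some _ _ _ _ H) as (p & v & -> & -> & H1 & H2).
  clear H. revert l Hb; induction p as [|e p IH]; intros [|a l]; simpl; auto.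
  - intros [H3 H4]; split; auto. intros H5; eapply nRtr; eauto.
  - intros [H3 H4]; split; auto. apply IH; auto. intros; apply H1; simpl; auto.
Qed.

Lemma below_key u l x y u' : chain u -> below l u -> row_ins X lt strict x u = (Some y, u') ->
  below (snd (row_ins X lt strict y l)) u'.
Proof.
  revert l x y u'; induction u as [|e u IH]; intros l x y u' Hc Hb H; simpl in H; [discriminate|].
  destruct (bumps X lt strict x e) eqn:E.
  - injection H as <- <-. destruct l as [|f l]; simpl.
    + split; auto. apply nR_bumps; auto.
    + simpl in Hb. destruct Hb as [Hb1 Hb2]. apply nR_bumps in Hb1. rewrite Hb1. simpl.
      split; auto. apply nR_bumps; auto.
  - destruct (row_ins X lt strict x u) as [o r''] eqn:E2. injection H as -> <-.
    inversion Hc as [|? ? Hc1 Hc2]; subst.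
    assert (Hy : In y u) by (apply (row_ins_in _ _ _ _ E2); auto).
    assert (Hey : ~ Rl y e).
    { intros Hye. destruct (row_ins_some _ _ _ _ E2) as (_ & _ & _ & _ & _ & Hyx).
      apply Hyx. eapply Rtr; eauto. }
    destruct l as [|f l]; simpl.
    + split; auto.
    + simpl in Hb; destruct Hb as [Hb1 Hb2].
      destruct (bumps X lt strict y f) eqn:E3; simpl.
      * split; auto. eapply below_ins_same; eauto.
      * destruct (row_ins X lt strict y l) as [o' l'] eqn:E4. simpl. split; auto.
        replace l' with (snd (row_ins X lt strict y l)) by (rewrite E4; auto).
        eapply IH; eauto.
Qed.

Lemma hd_tab_ins y t : hd_row (tab_ins X lt strict y t) = snd (row_ins X lt strict y (hd_row t)).
Proof.
  destruct t as [|r t]; simpl; auto.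
  destruct (row_ins X lt strict y r) as [[z|] r']; auto.
Qed.

Lemma valid_ins x t : valid t -> valid (tab_ins X lt strict x t).
Proof.
  revert x; induction t as [|r t IH]; intros x Hv; simpl.
  - repeat split; auto. constructor; [simpl; tauto|constructor].
  - destruct Hv as (H1 & H2 & H3).
    destruct (row_ins X lt strict x r) as [[y|] r'] eqn:E; simpl.
    + repeat split; auto.
      * eapply chain_ins; eauto.
      * rewrite hd_tab_ins. eapply below_key; eauto.
    + repeat split; auto.
      * eapply chain_ins; eauto.
      * destruct (row_ins_none _ _ _ E) as [-> _]. apply below_app; auto.
Qed.

Lemma valid_RSK w : valid (RSK lt strict w).
Proof.
  unfold RSK. assert (H : valid []) by exact I. revert H. generalize (@nil (list X)).
  induction w as [|x w IH]; simpl; auto. intros t Ht. apply IH, valid_ins; auto.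
Qed.

End Gen.


Section Kn.
Variable X : Type.
Variable lt : X -> X -> bool.
Variable strict : X -> bool.
Local Notation R := (Rl X lt strict).
Hypothesis Rtr : forall a b c, R a b -> R b c -> R a c.
Hypothesis nRtr : forall a b c, ~R a b -> ~R b c -> ~R a c.

Inductive keq : list X -> list X -> Prop :=
| keq_refl w : keq w w
| keq_k1 u v a b c : R a b -> ~R a c -> keq (u++a::b::c::v) (u++a::c::b::v)
| keq_k2 u v a b c : R a c -> ~R b c -> keq (u++a::b::c::v) (u++b::a::c::v)
| keq_sym w w' : keq w w' -> keq w' w
| keq_trans w1 w2 w3 : keq w1 w2 -> keq w2 w3 -> keq w1 w3.

Lemma keq_ctx p q w w' : keq w w' -> keq (p ++ w ++ q) (p ++ w' ++ q).
Proof.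
  induction 1.
  - apply keq_refl.
  - rewrite !app_assoc, <- !(app_assoc (p ++ u)). simpl. apply keq_k1; auto.
  - rewrite !app_assoc, <- !(app_assoc (p ++ u)). simpl. apply keq_k2; auto.
  - apply keq_sym; auto.
  - eapply keq_trans; eauto.
Qed.

Lemma keq_pre p w w' : keq w w' -> keq (p ++ w) (p ++ w').
Proof. intros H. assert (H1 := keq_ctx p [] _ _ H). rewrite !app_nil_r in H1. auto. Qed.
Lemma keq_suf q w w' : keq w w' -> keq (w ++ q) (w' ++ q).
Proof. intros H. exact (keq_ctx [] q _ _ H). Qed.

Lemma chain_split u y v : chain X lt strict (u ++ y :: v) ->
  chain X lt strict (u ++ [y]) /\ chain X lt strict (y :: v).
Proof.
  unfold chain. intros H. apply (pw_app3 _ _ u [y] v) in H.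
  destruct H as (A1 & A2 & A3 & A4 & A5 & A6). split.
  - apply pw_app; auto.
  - constructor; auto. intros b Hb; apply (A6 y b); simpl; auto.
Qed.

Lemma ph1 x : forall v a, chain X lt strict (a :: v) -> ~ R a x -> keq ((a :: v) ++ [x]) (a :: x :: v).
Proof.
  induction v as [|b v IH]; intros a Hc Hax; simpl.
  - apply keq_refl.
  - inversion Hc as [|? ? Hc1 Hc2]; subst.
    assert (Hab : R a b) by (apply Hc1; simpl; auto).
    assert (Hbx : ~ R b x) by (intros H; apply Hax; eapply Rtr; eauto).
    assert (H := keq_ctx [a] [] _ _ (IH b Hc2 Hbx)). simpl in H. rewrite !app_nil_r in H.
    eapply keq_trans; [exact H|]. apply (keq_k1 [] v a b x); auto.
Qed.

Lemma ph2 y : forall u c v, chain X lt strict (u ++ [y]) -> (forall e, In e u -> R e c) -> ~ R y c ->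
  keq (u ++ y :: c :: v) (y :: u ++ c :: v).
Proof.
  induction u as [|e u IH] using rev_ind; intros c v Hc H1 H2; simpl.
  - apply keq_refl.
  - rewrite <- app_assoc in Hc |- *. simpl.
    assert (Hec : R e c) by (apply H1; apply in_or_app; simpl; auto).
    eapply keq_trans.
    + apply (keq_k2 u v e y c); auto.
    + rewrite <- app_assoc. simpl. apply IH.
      * unfold chain in *. apply (pw_app3 _ _ u [e] [y]) in Hc as (A1 & A2 & A3 & A4 & A5 & A6).
        apply pw_app; auto.
      * intros e' He'. unfold chain in Hc. apply (pw_app3 _ _ u [e] [y]) in Hc as (A1 & A2 & A3 & A4 & A5 & A6). apply A4; simpl; auto.
      * intros Hye. apply H2. eapply Rtr; eauto.
Qed.

Lemma row_keq x r y r' : chain X lt strict r -> row_ins X lt strict x r = (Some y, r') ->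
  keq (r ++ [x]) (y :: r').
Proof.
  intros Hc H. destruct (row_ins_some _ _ _ _ _ _ _ H) as (u & v & -> & -> & H1 & H2).
  apply chain_split in Hc as [Hc1 Hc2].
  assert (H3 := keq_ctx u [] _ _ (ph1 x v y Hc2 H2)). rewrite !app_nil_r in H3.
  rewrite <- app_assoc. eapply keq_trans; [exact H3|]. apply ph2; auto.
Qed.

Definition read (t : list (list X)) : list X := concat (rev t).
Lemma read_cons r t : read (r :: t) = read t ++ r.
Proof. unfold read; simpl. rewrite concat_app; simpl. rewrite app_nil_r; auto. Qed.

Lemma read_ins x t : valid X lt strict t -> keq (read (tab_ins X lt strict x t)) (read t ++ [x]).
Proof.
  revert x; induction t as [|r t IH]; intros x Hv; simpl.
  - apply keq_refl.
  - destruct Hv as (H1 & H2 & H3).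
    destruct (row_ins X lt strict x r) as [[y|] r'] eqn:E.
    + rewrite !read_cons. eapply keq_trans.
      * apply (keq_suf r' _ _ (IH y H3)).
      * rewrite <- !app_assoc. apply keq_pre. simpl.
        apply keq_sym, row_keq; auto.
    + destruct (row_ins_none _ _ _ _ _ _ E) as [-> _]. rewrite !read_cons, app_assoc. apply keq_refl.
Qed.

Lemma read_fold w : forall t, valid X lt strict t ->
  keq (read (fold_left (fun t x => tab_ins X lt strict x t) w t)) (read t ++ w).
Proof.
  induction w as [|x w IH]; intros t Ht; simpl.
  - rewrite app_nil_r; apply keq_refl.
  - eapply keq_trans. apply IH. apply valid_ins; auto.
    replace (read t ++ x :: w) with ((read t ++ [x]) ++ w) by (rewrite <- app_assoc; auto).
    apply keq_suf. apply read_ins; auto.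
Qed.

Lemma read_RSK w : keq (read (RSK lt strict w)) w.
Proof. unfold RSK. exact (read_fold w [] I). Qed.
End Kn.


Section Lab.
Variable X : Type.
Variable lt : X -> X -> bool.
Variable strict : X -> bool.
Local Notation R := (Rl X lt strict).
Hypothesis Rtr : forall a b c, R a b -> R b c -> R a c.
Hypothesis nRtr : forall a b c, ~R a b -> ~R b c -> ~R a c.
Variable k : nat.

Definition Plab (p q : X * nat) : Prop := snd p = snd q -> snd p <> 0 -> R (fst p) (fst q).
Definition good (lw : list (X * nat)) : Prop := pw Plab lw /\ Forall (fun p => snd p <= k) lw.
Definition size (lw : list (X * nat)) : nat := length (filter (fun p => negb (snd p =? 0)) lw).
Definition Gr (w : list X) (s : nat) : Prop := exists lw, map fst lw = w /\ good lw /\ s <= size lw.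

Lemma size_app l1 l2 : size (l1 ++ l2) = size l1 + size l2.
Proof. unfold size. rewrite filter_app, length_app. auto. Qed.

Lemma decomp3 (lw : list (X * nat)) u a b c v : map fst lw = u ++ a :: b :: c :: v ->
  exists lu la lb lc lv, lw = lu ++ [(a,la);(b,lb);(c,lc)] ++ lv /\ map fst lu = u /\ map fst lv = v.
Proof.
  intros H. apply map_eq_app in H as (lu & l2 & -> & H1 & H2).
  apply map_eq_cons in H2 as ([a' la] & l3 & -> & Ha & H3). simpl in Ha; subst.
  apply map_eq_cons in H3 as ([b' lb] & l4 & -> & Hb & H4). simpl in Hb; subst.
  apply map_eq_cons in H4 as ([c' lc] & lv & -> & Hc & H5). simpl in Hc; subst.
  exists lu, la, lb, lc, lv. auto.
Qed.

Lemma pw3 (P : X * nat -> X * nat -> Prop) x y z : P x y -> P x z -> P y z -> pw P [x; y; z].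
Proof.
  intros. constructor; [intros b [<-|[<-|[]]]; auto|].
  constructor; [intros b [<-|[]]; auto|]. constructor; [intros b []|constructor].
Qed.

Lemma simple_tr lu M M' lv : good (lu ++ M ++ lv) -> pw Plab M' ->
  (forall q, In q M' -> In q M) -> size M' = size M ->
  good (lu ++ M' ++ lv) /\ size (lu ++ M' ++ lv) = size (lu ++ M ++ lv).
Proof.
  intros [H1 H2] H3 H4 H5. rewrite !size_app, H5. split; auto. split.
  - apply pw_app3 in H1 as (A1 & A2 & A3 & A4 & A5 & A6). apply pw_app3; repeat split; auto.
  - rewrite Forall_forall in *. intros x Hx. apply H2.
    repeat (apply in_app_or in Hx as [Hx|Hx]); apply in_or_app; auto; right; apply in_or_app; auto.
Qed.

Definition sw (s t n : nat) := if n =? s then t else if n =? t then s else n.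
Definition swl s t (lv : list (X * nat)) := map (fun q => (fst q, sw s t (snd q))) lv.

Lemma sw_inj s t a b : sw s t a = sw s t b -> a = b.
Proof. unfold sw. destruct (a =? s) eqn:E1, (b =? s) eqn:E2, (a =? t) eqn:E3, (b =? t) eqn:E4;
  rewrite ?Nat.eqb_eq, ?Nat.eqb_neq in *; lia. Qed.
Lemma sw_0 s t a : s <> 0 -> t <> 0 -> (sw s t a = 0 <-> a = 0).
Proof. unfold sw. destruct (a =? s) eqn:E1, (a =? t) eqn:E3; rewrite ?Nat.eqb_eq, ?Nat.eqb_neq in *; lia. Qed.

Lemma swl_good lv s t : s <> 0 -> t <> 0 -> s <= k -> t <= k -> good lv ->
  good (swl s t lv) /\ size (swl s t lv) = size lv.
Proof.
  intros Hs Ht Hsk Htk [H1 H2]. split; [split|].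
  - unfold swl. induction H1 as [|a l Ha Hl IH]; simpl; constructor.
    + intros b Hb. apply in_map_iff in Hb as (b' & <- & Hb'). unfold Plab in *; simpl.
      intros E N. apply sw_inj in E. apply Ha; auto. rewrite <- (sw_0 s t); auto.
    + apply IH. inversion H2; auto.
  - unfold swl. rewrite Forall_forall in *. intros x Hx. apply in_map_iff in Hx as (x' & <- & Hx'). simpl.
    specialize (H2 x' Hx'). unfold sw. destruct (snd x' =? s), (snd x' =? t); lia.
  - clear H1 H2. induction lv as [|a l IH]; simpl; auto. unfold size in *; simpl.
    destruct (sw s t (snd a) =? 0) eqn:E1, (snd a =? 0) eqn:E2; simpl; rewrite ?IH; auto;
    rewrite ?Nat.eqb_eq, ?Nat.eqb_neq in *; exfalso; apply (sw_0 s t (snd a)) in Hs; auto; tauto.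
Qed.

Lemma in_swl s t q' lv : In q' (swl s t lv) -> exists q, In q lv /\ q' = (fst q, sw s t (snd q)).
Proof. unfold swl. intros H. apply in_map_iff in H as (q & <- & Hq). eauto. Qed.

Lemma sw_cases s t n : (n = s /\ sw s t n = t) \/ (n = t /\ n <> s /\ sw s t n = s) \/ (n <> s /\ n <> t /\ sw s t n = n).
Proof. unfold sw. destruct (n =? s) eqn:E1, (n =? t) eqn:E3; rewrite ?Nat.eqb_eq, ?Nat.eqb_neq in *; lia. Qed.


Lemma pw3_inv (P : X * nat -> X * nat -> Prop) x y z : pw P [x; y; z] -> P x y /\ P x z /\ P y z.
Proof.
  intros H. inversion H as [|? ? H1 H2]; subst. inversion H2 as [|? ? H3 H4]; subst.
  repeat split; [apply H1|apply H1|apply H3]; simpl; auto.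
Qed.

Ltac inM H := destruct H as [<-|[<-|[<-|[]]]].

Lemma tr_k1f u v a b c s : R a b -> ~R a c -> Gr (u++a::b::c::v) s -> Gr (u++a::c::b::v) s.
Proof.
  intros Hab Hac (lw & Hm & Hg & Hs).
  destruct (decomp3 _ _ _ _ _ _ Hm) as (lu & la & lb & lc & lv & -> & Hu & Hv).
  pose proof Hg as [Hp _]. apply pw_app3 in Hp as (_ & PM & _). apply pw3_inv in PM as (Pab & Pac & Pbc).
  unfold Plab in Pab, Pac, Pbc; simpl in *.
  assert (Hbc : ~ (lb = lc /\ lb <> 0)).
  { intros [E N]. apply Hac. apply (Rtr a b c Hab (Pbc E N)). }
  destruct (simple_tr lu [(a,la);(b,lb);(c,lc)] [(a,la);(c,lc);(b,lb)] lv Hg) as [G1 G2].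
  - apply pw3; unfold Plab; simpl; auto. intros; exfalso; apply Hbc; split; auto. congruence.
  - intros q Hq; simpl in *; tauto.
  - unfold size; simpl. destruct (la =? 0), (lb =? 0), (lc =? 0); simpl; lia.
  - exists (lu ++ [(a,la);(c,lc);(b,lb)] ++ lv). split; [rewrite map_app; simpl; rewrite Hu, Hv; auto|].
    split; auto. simpl in G2 |- *. lia.
Qed.

Lemma tr_k2b u v a b c s : R a c -> ~R b c -> Gr (u++b::a::c::v) s -> Gr (u++a::b::c::v) s.
Proof.
  intros Hac Hbc (lw & Hm & Hg & Hs).
  destruct (decomp3 _ _ _ _ _ _ Hm) as (lu & lb & la & lc & lv & -> & Hu & Hv).
  pose proof Hg as [Hp _]. apply pw_app3 in Hp as (_ & PM & _). apply pw3_inv in PM as (Pba & Pbc & Pac).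
  unfold Plab in Pba, Pbc, Pac; simpl in *.
  assert (Hba : ~ (lb = la /\ lb <> 0)).
  { intros [E N]. apply Hbc. apply (Rtr b a c (Pba E N) Hac). }
  destruct (simple_tr lu [(b,lb);(a,la);(c,lc)] [(a,la);(b,lb);(c,lc)] lv Hg) as [G1 G2].
  - apply pw3; unfold Plab; simpl; auto. intros; exfalso; apply Hba; split; auto. congruence.
  - intros q Hq; simpl in *; tauto.
  - unfold size; simpl. destruct (la =? 0), (lb =? 0), (lc =? 0); simpl; lia.
  - exists (lu ++ [(a,la);(b,lb);(c,lc)] ++ lv). split; [rewrite map_app; simpl; rewrite Hu, Hv; auto|].
    split; auto. simpl in G2 |- *. lia.
Qed.


Lemma lab_ok (lu M M' lv lv' : list (X * nat)) : Forall (fun p => snd p <= k) (lu ++ M ++ lv) ->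
  Forall (fun p => snd p <= k) M' -> Forall (fun p => snd p <= k) lv' ->
  Forall (fun p => snd p <= k) (lu ++ M' ++ lv').
Proof. rewrite !Forall_app. tauto. Qed.

Lemma good_lv (lu M lv : list (X * nat)) : good (lu ++ M ++ lv) -> good lv.
Proof.
  intros [H1 H2]. apply pw_app3 in H1 as (_ & _ & H1 & _). split; auto.
  rewrite !Forall_app in H2. tauto.
Qed.

Lemma F3 (x y z : X * nat) : snd x <= k -> snd y <= k -> snd z <= k -> Forall (fun p => snd p <= k) [x;y;z].
Proof. intros; repeat constructor; auto. Qed.

Lemma tr_k1b u v a b c s : R a b -> ~R a c -> Gr (u++a::c::b::v) s -> Gr (u++a::b::c::v) s.
Proof.
  intros Hab Hac (lw & Hm & Hg & Hs).
  destruct (decomp3 _ _ _ _ _ _ Hm) as (lu & la & lc & lb & lv & -> & Hu & Hv).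
  pose proof Hg as [Hp Hf]. apply pw_app3 in Hp as (Pu & PM & Pv & Pum & Puv & PMv).
  apply pw3_inv in PM as (Pac & Pab & Pcb). unfold Plab in Pac, Pab, Pcb; simpl in Pac, Pab, Pcb.
  assert (Hla : la = lc -> la = 0) by (intros E; destruct (Nat.eq_dec la 0); auto; exfalso; apply Hac, Pac; auto).
  pose proof Hf as Hf'. rewrite !Forall_app in Hf'. destruct Hf' as (_ & HfM & _).
  inversion HfM as [|? ? Fa HfM1]; inversion HfM1 as [|? ? Fc HfM2]; inversion HfM2 as [|? ? Fb _]; simpl in Fa, Fb, Fc.
  assert (Hmap : forall M', map fst M' = [a; b; c] -> forall lv', map fst lv' = v ->
     map fst (lu ++ M' ++ lv') = u ++ a :: b :: c :: v).
  { intros M' HM lv' Hv'. rewrite !map_app, HM, Hu, Hv'. auto. }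
  destruct (Nat.eq_dec lc lb) as [Ecb|Ncb]; [destruct (Nat.eq_dec lb 0) as [Z|NZ]|].
  2: subst lc; destruct (Nat.eq_dec la 0) as [Za|NZa].
  1,4: destruct (simple_tr lu [(a,la);(c,lc);(b,lb)] [(a,la);(b,lb);(c,lc)] lv Hg) as [G1 G2];
    [ apply pw3; unfold Plab; simpl; auto; intros; exfalso; lia
    | intros q Hq; simpl in *; tauto
    | unfold size; simpl; destruct (la =? 0), (lb =? 0), (lc =? 0); simpl; lia
    | exists (lu ++ [(a,la);(b,lb);(c,lc)] ++ lv); split; [apply Hmap; auto|];
      split; auto; simpl in G2, Hs |- *; lia ].
  -
    subst la. exists (lu ++ [(a,lb);(b,lb);(c,0)] ++ lv). split; [apply Hmap; auto|]. split; [split|].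
    + apply pw_app3. split; [auto|split; [|split; [auto|split; [|split; [auto|]]]]].
      * apply pw3; unfold Plab; simpl; auto; intros; lia.
      * intros [xx lxx] q Hp Hq. inM Hq; unfold Plab; simpl; intros E N.
        -- assert (Q1 := Pum (xx,lxx) (c,lb) Hp ltac:(simpl; auto)). unfold Plab in Q1; simpl in Q1.
           eapply L1; eauto.
        -- apply (Pum (xx,lxx) (b,lb) Hp ltac:(simpl; auto)); auto.
        -- lia.
      * intros p [yy lyy] Hp Hq. inM Hp; unfold Plab; simpl; intros E N.
        -- assert (Q1 := PMv (b,lb) (yy,lyy) ltac:(simpl; auto) Hq). unfold Plab in Q1; simpl in Q1.
           apply (Rtr a b yy Hab); apply Q1; auto.
        -- apply (PMv (b,lb) (yy,lyy) ltac:(simpl; auto) Hq); auto.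
        -- lia.
    + eapply lab_ok; [exact Hf| apply F3; simpl; lia | destruct (good_lv _ _ _ Hg); auto].
    + rewrite !size_app in *. revert Hs. unfold size; simpl.
      destruct (lb =? 0) eqn:E; simpl; [apply Nat.eqb_eq in E; lia|]. lia.
  -
    assert (Nab : la <> lb) by (intros E; apply NZa, Hla; auto).
    destruct (swl_good lv lb la NZ NZa Fb Fa (good_lv _ _ _ Hg)) as [[Gv1 Gv2] Gv3].
    exists (lu ++ [(a,la);(b,la);(c,lb)] ++ swl lb la lv).
    split; [apply Hmap; auto; unfold swl; rewrite map_map; simpl; auto|]. split; [split|].
    + apply pw_app3. split; [auto|split; [|split; [auto|split; [|split]]]].
      * apply pw3; unfold Plab; simpl; auto; intros; lia.
      * intros [xx lxx] q Hp Hq.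
        assert (Q1 := Pum (xx,lxx) (a,la) Hp ltac:(simpl; auto)).
        assert (Q2 := Pum (xx,lxx) (c,lb) Hp ltac:(simpl; auto)).
        unfold Plab in Q1, Q2; simpl in Q1, Q2.
        inM Hq; unfold Plab; simpl; intros E N; auto. eapply Rtr; eauto.
      * intros [xx lxx] q' Hp Hq'. apply in_swl in Hq' as ([yy lyy] & Hq & ->).
        assert (Q1 := Pum (xx,lxx) (a,la) Hp ltac:(simpl; auto)).
        assert (Q2 := Pum (xx,lxx) (c,lb) Hp ltac:(simpl; auto)).
        assert (Q3 := PMv (b,lb) (yy,lyy) ltac:(simpl; auto) Hq).
        assert (Q4 := PMv (a,la) (yy,lyy) ltac:(simpl; auto) Hq).
        assert (Q5 := Puv (xx,lxx) (yy,lyy) Hp Hq).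
        unfold Plab in *; simpl in *. intros E N.
        destruct (sw_cases lb la lyy) as [[E1 E2]|[[E1 [E2 E3]]|[E1 [E2 E3]]]].
        -- rewrite E2 in E. subst. eapply Rtr; [apply Q1; auto|]. eapply Rtr; eauto.
        -- rewrite E3 in E. subst. eapply Rtr; [apply Q2; auto|]. eapply L2; eauto.
        -- rewrite E3 in E. auto.
      * intros p q' Hp Hq'. apply in_swl in Hq' as ([yy lyy] & Hq & ->).
        assert (Q3 := PMv (b,lb) (yy,lyy) ltac:(simpl; auto) Hq).
        assert (Q4 := PMv (a,la) (yy,lyy) ltac:(simpl; auto) Hq).
        unfold Plab in *; simpl in *.
        destruct (sw_cases lb la lyy) as [[E1 E2]|[[E1 [E2 E3]]|[E1 [E2 E3]]]];
        inM Hp; simpl; intros E N; try lia.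
        -- eapply Rtr; eauto.
        -- auto.
        -- eapply L2; eauto.
    + eapply lab_ok; [exact Hf| apply F3; simpl; lia | exact Gv2].
    + rewrite !size_app in *. rewrite Gv3. revert Hs. unfold size; simpl.
      destruct (lb =? 0) eqn:E; simpl; [apply Nat.eqb_eq in E; lia|].
      destruct (la =? 0) eqn:E'; simpl; [apply Nat.eqb_eq in E'; lia|]. lia.
Qed.

Lemma tr_k2f u v a b c s : R a c -> ~R b c -> Gr (u++a::b::c::v) s -> Gr (u++b::a::c::v) s.
Proof.
  intros Hac Hbc (lw & Hm & Hg & Hs).
  destruct (decomp3 _ _ _ _ _ _ Hm) as (lu & la & lb & lc & lv & -> & Hu & Hv).
  pose proof Hg as [Hp Hf]. apply pw_app3 in Hp as (Pu & PM & Pv & Pum & Puv & PMv).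
  apply pw3_inv in PM as (Pab & Pac & Pbc). unfold Plab in Pac, Pab, Pbc; simpl in Pac, Pab, Pbc.
  assert (Hlb : lb = lc -> lb = 0) by (intros E; destruct (Nat.eq_dec lb 0); auto; exfalso; apply Hbc, Pbc; auto).
  pose proof Hf as Hf'. rewrite !Forall_app in Hf'. destruct Hf' as (_ & HfM & _).
  apply Forall_inv in HfM as Fa0. apply Forall_inv_tail in HfM. apply Forall_inv in HfM as Fb0.
  apply Forall_inv_tail in HfM. apply Forall_inv in HfM as Fc0. simpl in Fa0, Fb0, Fc0.
  assert (Hmap : forall M', map fst M' = [b; a; c] -> forall lv', map fst lv' = v ->
     map fst (lu ++ M' ++ lv') = u ++ b :: a :: c :: v).
  { intros M' HM lv' Hv'. rewrite !map_app, HM, Hu, Hv'. auto. }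
  destruct (Nat.eq_dec la lb) as [Eab|Nab]; [destruct (Nat.eq_dec lb 0) as [Z|NZ]|].
  2: subst la; destruct (Nat.eq_dec lc 0) as [Zc|NZc].
  1,4: destruct (simple_tr lu [(a,la);(b,lb);(c,lc)] [(b,lb);(a,la);(c,lc)] lv Hg) as [G1 G2];
    [ apply pw3; unfold Plab; simpl; auto; intros; exfalso; lia
    | intros q Hq; simpl in *; tauto
    | unfold size; simpl; destruct (la =? 0), (lb =? 0), (lc =? 0); simpl; lia
    | exists (lu ++ [(b,lb);(a,la);(c,lc)] ++ lv); split; [apply Hmap; auto|];
      split; auto; simpl in G2, Hs |- *; lia ].
  - subst lc. exists (lu ++ [(b,0);(a,lb);(c,lb)] ++ lv). split; [apply Hmap; auto|]. split; [split|].
    + apply pw_app3. split; [auto|split; [|split; [auto|split; [|split; [auto|]]]]].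
      * apply pw3; unfold Plab; simpl; auto; intros; lia.
      * intros [xx lxx] q Hp Hq.
        assert (Q1 := Pum (xx,lxx) (a,lb) Hp ltac:(simpl; auto)). unfold Plab in Q1; simpl in Q1.
        inM Hq; unfold Plab; simpl; intros E N; try lia; auto.
        apply (Rtr xx a c); auto.
      * intros p [yy lyy] Hp Hq.
        assert (Q1 := PMv (b,lb) (yy,lyy) ltac:(simpl; auto) Hq).
        assert (Q2 := PMv (a,lb) (yy,lyy) ltac:(simpl; auto) Hq).
        unfold Plab in Q1, Q2; simpl in Q1, Q2.
        inM Hp; unfold Plab; simpl; intros E N; try lia; auto.
        eapply L2; eauto.
    + eapply lab_ok; [exact Hf| apply F3; simpl; lia | destruct (good_lv _ _ _ Hg); auto].
    + rewrite !size_app in *. revert Hs. unfold size; simpl.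
      destruct (lb =? 0) eqn:E; simpl; [apply Nat.eqb_eq in E; lia|]. lia.
  - assert (Nbc : lb <> lc) by (intros E; apply NZ, Hlb; auto).
    destruct (swl_good lv lb lc NZ NZc Fb0 Fc0 (good_lv _ _ _ Hg)) as [[Gv1 Gv2] Gv3].
    exists (lu ++ [(b,lc);(a,lb);(c,lb)] ++ swl lb lc lv).
    split; [apply Hmap; auto; unfold swl; rewrite map_map; simpl; auto|]. split; [split|].
    + apply pw_app3. split; [auto|split; [|split; [auto|split; [|split]]]].
      * apply pw3; unfold Plab; simpl; auto; intros; lia.
      * intros [xx lxx] q Hp Hq.
        assert (Q1 := Pum (xx,lxx) (a,lb) Hp ltac:(simpl; auto)).
        assert (Q2 := Pum (xx,lxx) (c,lc) Hp ltac:(simpl; auto)).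
        unfold Plab in Q1, Q2; simpl in Q1, Q2.
        inM Hq; unfold Plab; simpl; intros E N; auto.
        -- eapply L1; eauto.
        -- apply (Rtr xx a c); auto.
      * intros [xx lxx] q' Hp Hq'. apply in_swl in Hq' as ([yy lyy] & Hq & ->).
        assert (Q1 := Pum (xx,lxx) (a,lb) Hp ltac:(simpl; auto)).
        assert (Q2 := Pum (xx,lxx) (c,lc) Hp ltac:(simpl; auto)).
        assert (Q3 := PMv (b,lb) (yy,lyy) ltac:(simpl; auto) Hq).
        assert (Q4 := PMv (c,lc) (yy,lyy) ltac:(simpl; auto) Hq).
        assert (Q5 := Puv (xx,lxx) (yy,lyy) Hp Hq).
        unfold Plab in *; simpl in *. intros E N.
        destruct (sw_cases lb lc lyy) as [[E1 E2]|[[E1 [E2 E3]]|[E1 [E2 E3]]]].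
        -- rewrite E2 in E. subst. apply (Rtr xx b yy); [eapply L1; eauto|auto].
        -- rewrite E3 in E. subst. apply (Rtr xx a yy); auto. apply (Rtr a c yy); auto.
        -- rewrite E3 in E. auto.
      * intros p q' Hp Hq'. apply in_swl in Hq' as ([yy lyy] & Hq & ->).
        assert (Q3 := PMv (b,lb) (yy,lyy) ltac:(simpl; auto) Hq).
        assert (Q4 := PMv (c,lc) (yy,lyy) ltac:(simpl; auto) Hq).
        unfold Plab in *; simpl in *.
        destruct (sw_cases lb lc lyy) as [[E1 E2]|[[E1 [E2 E3]]|[E1 [E2 E3]]]];
        inM Hp; simpl; intros E N; try lia.
        -- auto.
        -- apply (Rtr a c yy); auto.
        -- auto.
    + eapply lab_ok; [exact Hf| apply F3; simpl; lia | exact Gv2].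
    + rewrite !size_app in *. rewrite Gv3. revert Hs. unfold size; simpl.
      destruct (lb =? 0) eqn:E; simpl; [apply Nat.eqb_eq in E; lia|].
      destruct (lc =? 0) eqn:E'; simpl; [apply Nat.eqb_eq in E'; lia|]. lia.
Qed.

Lemma keq_Gr w w' : keq X lt strict w w' -> (forall s, Gr w s -> Gr w' s) /\ (forall s, Gr w' s -> Gr w s).
Proof.
  induction 1.
  - tauto.
  - split; intros s'; [apply tr_k1f|apply tr_k1b]; auto.
  - split; intros s'; [apply tr_k2f|apply tr_k2b]; auto.
  - tauto.
  - destruct IHkeq1 as [A1 A2], IHkeq2 as [B1 B2]. split; intros s' Hs'; auto.
Qed.

End Lab.


Lemma pw_map A B (P : A -> A -> Prop) (Q : B -> B -> Prop) (f : A -> B) l :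
  (forall a b, P a b -> Q (f a) (f b)) -> pw P l -> pw Q (map f l).
Proof.
  intros H. induction 1; simpl; constructor; auto.
  intros b Hb. apply in_map_iff in Hb as (b' & <- & Hb'). auto.
Qed.

Lemma pw_map_inv A B (P : B -> B -> Prop) (f : A -> B) l :
  pw P (map f l) -> pw (fun a b => P (f a) (f b)) l.
Proof.
  induction l as [|a l IH]; simpl; intros H; constructor; inversion H as [|? ? H1 H2]; subst; auto.
  intros b Hb. apply H1, in_map; auto.
Qed.

Lemma pw_and A (P Q : A -> A -> Prop) l : pw P l -> pw Q l -> pw (fun a b => P a b /\ Q a b) l.
Proof.
  induction 1 as [|a l H1 H2 IH]; intros HQ; constructor; inversion HQ as [|? ? H3 H4]; subst; auto.
Qed.

Lemma cr A (x : list A) L : concat (rev (x :: L)) = concat (rev L) ++ x.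
Proof. simpl. rewrite concat_app; simpl. rewrite app_nil_r; auto. Qed.

Lemma partsum_cons m x l : partsum (S m) (x :: l) = x + partsum m l.
Proof. reflexivity. Qed.
Lemma partsum_0 l : partsum 0 l = 0.
Proof. reflexivity. Qed.
Lemma partsum_nil m : partsum m [] = 0.
Proof. destruct m; reflexivity. Qed.

Lemma partsum_add A (f g : A -> nat) m t :
  partsum m (map (fun r => f r + g r) t) = partsum m (map f t) + partsum m (map g t).
Proof.
  revert m; induction t as [|r t IH]; intros [|m]; simpl; rewrite ?partsum_nil; auto.
  rewrite !partsum_cons, IH. lia.
Qed.

Lemma filter_all A (f : A -> bool) l : (forall x, f x = true) -> filter f l = l.
Proof. intros H; induction l; simpl; auto; rewrite H, IHl; auto. Qed.
Lemma filter_none A (f : A -> bool) l : (forall x, f x = false) -> filter f l = [].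
Proof. intros H; induction l; simpl; auto; rewrite H, IHl; auto. Qed.

Section D.
Variable X : Type.
Variable lt : X -> X -> bool.
Variable strict : X -> bool.
Local Notation R := (Rl X lt strict).
Hypothesis Rtr : forall a b c, R a b -> R b c -> R a c.
Hypothesis nRtr : forall a b c, ~R a b -> ~R b c -> ~R a c.
Variable k : nat.
Local Notation good := (good X lt strict k).
Local Notation Plab := (Plab X lt strict).
Local Notation size := (size X).
Local Notation read := (read X).
Local Notation valid := (valid X lt strict).

Fixpoint labT (n : nat) (t : list (list X)) : list (X * nat) :=
  match t with
  | [] => []
  | r :: t' => labT (S n) t' ++ map (fun a => (a, if n <? k then S n else 0)) r
  end.

Lemma labT_fst n t : map fst (labT n t) = read t.
Proof.
  revert n; induction t as [|r t IH]; intros n; simpl; auto.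
  rewrite read_cons, map_app, IH, map_map. simpl. rewrite map_id. auto.
Qed.

Lemma labT_lab n t q : In q (labT n t) -> (snd q = 0 \/ n < snd q) /\ snd q <= k.
Proof.
  revert n; induction t as [|r t IH]; intros n H; simpl in H; [tauto|].
  apply in_app_or in H as [H|H].
  - apply IH in H. lia.
  - apply in_map_iff in H as (a & <- & _). simpl. destruct (n <? k) eqn:E; [apply Nat.ltb_lt in E|]; lia.
Qed.

Lemma labT_good n t : valid t -> good (labT n t).
Proof.
  revert n; induction t as [|r t IH]; intros n Hv; simpl.
  - split; constructor.
  - destruct Hv as (H1 & H2 & H3). destruct (IH (S n) H3) as [G1 G2]. split.
    + apply pw_app. split; [auto|split].
      * eapply pw_map; [|exact H1]. intros a b Hab. unfold Plab; simpl. auto.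
      * intros q q' Hq Hq'. apply labT_lab in Hq. apply in_map_iff in Hq' as (a & <- & _).
        unfold Plab; simpl. intros E N. destruct (n <? k); lia.
    + apply Forall_app. split; auto. apply Forall_forall. intros q Hq.
      apply in_map_iff in Hq as (a & <- & _). simpl. destruct (n <? k) eqn:E; [apply Nat.ltb_lt in E|]; lia.
Qed.

Lemma labT_size n t : size (labT n t) = partsum (k - n) (map (@length X) t).
Proof.
  revert n; induction t as [|r t IH]; intros n; simpl; [rewrite partsum_nil; auto|].
  rewrite size_app, IH. unfold size. rewrite filter_map_swap. simpl.
  destruct (n <? k) eqn:E.
  - apply Nat.ltb_lt in E. replace (k - n) with (S (k - S n)) by lia. rewrite partsum_cons. simpl.
    rewrite filter_all by auto. rewrite length_map. lia.
  - apply Nat.ltb_ge in E. replace (k - n) with 0 by lia. replace (k - S n) with 0 by lia.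
    rewrite !partsum_0. simpl. rewrite filter_none by auto. auto.
Qed.

Lemma D1 t : valid t -> Gr X lt strict k (read t) (partsum k (map (@length X) t)).
Proof.
  intros Hv. exists (labT 0 t). split; [apply labT_fst|]. split; [apply labT_good; auto|].
  rewrite labT_size, Nat.sub_0_r. auto.
Qed.

End D.


Lemma map_cr A B (f : A -> B) L : map f (concat (rev L)) = concat (rev (map (map f) L)).
Proof. induction L as [|x L IH]; auto. rewrite map_cons, !cr, map_app, IH. auto. Qed.

Lemma sub_nil_l A (l : list A) : sub [] l.
Proof. induction l; constructor; auto. Qed.

Lemma sub_cr A (f : list A -> list A) (H : forall l, sub (f l) l) L :
  sub (concat (rev (map f L))) (concat (rev L)).
Proof.
  induction L as [|x L IH]; [constructor|].
  rewrite map_cons, !cr. apply sub_app; auto.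
Qed.

Lemma sub_tl A (l : list A) : sub (tl l) l.
Proof. destruct l; simpl; [constructor|apply sub_skip, sub_refl]. Qed.
Lemma sub_first A (l : list A) : sub (firstn 1 l) l.
Proof. destruct l; simpl; [constructor|apply sub_keep, sub_nil_l]. Qed.

Lemma map_tl A B (f : A -> B) l : map f (tl l) = tl (map f l).
Proof. destruct l; auto. Qed.

Section D2.
Variable X : Type.
Variable lt : X -> X -> bool.
Variable strict : X -> bool.
Local Notation R := (Rl X lt strict).
Hypothesis Rtr : forall a b c, R a b -> R b c -> R a c.
Hypothesis nRtr : forall a b c, ~R a b -> ~R b c -> ~R a c.
Variable k : nat.
Local Notation good := (good X lt strict k).
Local Notation Plab := (Plab X lt strict).
Local Notation size := (size X).
Local Notation read := (read X).
Local Notation valid := (valid X lt strict).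

Definition hds (t : list (list X)) := concat (rev (map (firstn 1) t)).

Lemma blocks t (lw : list (X * nat)) : map fst lw = read t ->
  exists B, map (map fst) B = t /\ lw = concat (rev B).
Proof.
  revert lw; induction t as [|r t IH]; intros lw H.
  - exists []. split; auto. apply map_eq_nil in H; auto.
  - rewrite read_cons in H. apply map_eq_app in H as (l1 & l2 & -> & H1 & H2).
    destruct (IH _ H1) as (B & HB & ->). exists (l2 :: B). split; [simpl; congruence|].
    rewrite cr; auto.
Qed.

Lemma valid_empty t : valid ([] :: t) -> Forall (fun r => r = []) t.
Proof.
  induction t as [|r t IH]; intros H; constructor.
  - destruct H as (_ & H & _). destruct r; simpl in H; auto; contradiction.
  - apply IH. destruct H as (_ & H & H'). destruct r; simpl in H; [|contradiction]. exact H'.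
Qed.

Lemma hds_empty t : Forall (fun r => r = []) t -> hds t = [].
Proof. induction 1; auto. unfold hds in *. rewrite map_cons, cr, IHForall. subst; auto. Qed.

Lemma valid_tl t : valid t -> valid (map (@tl X) t).
Proof.
  induction t as [|r t IH]; simpl; auto. intros (H1 & H2 & H3). repeat split; auto.
  - eapply sub_pw; [apply sub_tl|exact H1].
  - destruct t as [|r2 t]; simpl in *; auto. destruct r2, r; simpl in *; tauto.
Qed.

Lemma colL t : forall r, valid (r :: t) -> forall a b, In a (hds t) -> In b (firstn 1 r) -> ~ R a b.
Proof.
  induction t as [|r2 t IH]; intros r Hv a b Ha Hb; [simpl in Ha; contradiction|].
  destruct Hv as (H1 & H2 & H3). unfold hds in Ha. rewrite map_cons, cr in Ha. fold (hds t) in Ha. apply in_app_or in Ha as [Ha|Ha].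
  - destruct r2 as [|b2 r2].
    + rewrite (hds_empty _ (valid_empty _ H3)) in Ha. contradiction.
    + destruct r as [|b1 r]; [contradiction|]. simpl in Hb, H2. destruct Hb as [<-|[]].
      apply (nRtr a b2 b1); [|tauto]. apply (IH (b2 :: r2) H3 a b2); simpl; auto.
  - destruct r2 as [|b2 r2]; [contradiction|]. destruct r as [|b1 r]; [contradiction|].
    simpl in Ha, Hb, H2. destruct Ha as [<-|[]]. destruct Hb as [<-|[]]. tauto.
Qed.

Lemma col_pw t : valid t -> pw (fun a b => ~ R a b) (hds t).
Proof.
  induction t as [|r t IH]; intros Hv; [constructor|]. unfold hds. rewrite map_cons, cr.
  apply pw_app. split; [apply IH, Hv|split].
  - destruct r; simpl; constructor; [intros ? []|constructor].
  - intros a b Ha Hb. eapply colL; eauto.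
Qed.

Lemma partsum_heads t : valid t -> forall m,
  partsum m (map (fun r => length (firstn 1 r)) t) = min m (length (hds t)).
Proof.
  induction t as [|r t IH]; intros Hv m; [cbn [map]; rewrite partsum_nil; simpl; lia|].
  unfold hds; rewrite (map_cons (firstn 1) r t), cr, length_app. fold (hds t).
  destruct r as [|a r].
  - assert (HE := valid_empty _ Hv). rewrite (hds_empty _ HE). simpl length.
    rewrite Nat.min_0_r.
    clear - HE. revert m. induction HE; intros m; cbn [map].
    + destruct m; [reflexivity|]. rewrite partsum_cons, partsum_nil. reflexivity.
    + subst. destruct m; [reflexivity|]. rewrite partsum_cons. simpl length.
      specialize (IHHE m). cbn [map] in IHHE. destruct m; [reflexivity|].
      rewrite partsum_cons in IHHE |- *. simpl length in IHHE. lia.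
  - destruct m; auto. cbn [map]. rewrite partsum_cons, IH by apply Hv. rewrite Nat.add_1_r. reflexivity.
Qed.

Lemma nodup_labs (l : list (X * nat)) : pw (fun p q => snd p = snd q -> snd p = 0) l ->
  NoDup (filter (fun n => negb (n =? 0)) (map snd l)).
Proof.
  induction 1 as [|q l H1 H2 IH]; simpl; [constructor|].
  destruct (snd q =? 0) eqn:E; simpl; auto. constructor; auto.
  intros Hin. apply filter_In in Hin as [Hin Hn]. apply in_map_iff in Hin as (q' & E1 & Hq').
  apply Nat.eqb_neq in E. apply E, (H1 q' Hq'); auto.
Qed.

Lemma size_labs (l : list (X * nat)) : size l = length (filter (fun n => negb (n =? 0)) (map snd l)).
Proof. unfold size. rewrite filter_map_swap, length_map. auto. Qed.

Lemma size_le_len (l : list (X * nat)) : size l <= length l.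
Proof. unfold size. apply filter_length_le. Qed.

Lemma heads_bound (hb : list (X * nat)) t : valid t -> map fst hb = hds t -> good hb ->
  size hb <= min k (length (hds t)).
Proof.
  intros Hv Hm [G1 G2]. apply Nat.min_glb.
  - rewrite size_labs. rewrite <- (length_seq k 1). apply NoDup_incl_length.
    + apply nodup_labs. assert (H := col_pw t Hv). rewrite <- Hm in H. apply pw_map_inv in H.
      assert (H2 := pw_and _ _ _ _ G1 H). eapply sub_pw; [apply sub_refl|].
      clear - H2. induction H2 as [|a l H1 H2' IH]; constructor; auto.
      intros b Hb E. destruct (Nat.eq_dec (snd a) 0); auto. exfalso. destruct (H1 b Hb) as [P1 P2].
      apply P2, P1; auto.
    + intros x Hx. apply filter_In in Hx as [Hx Hn]. apply in_map_iff in Hx as (q & <- & Hq).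
      rewrite Forall_forall in G2. specialize (G2 q Hq). apply in_seq.
      destruct (snd q =? 0) eqn:E; [discriminate|]. apply Nat.eqb_neq in E. lia.
  - rewrite <- Hm, length_map. apply size_le_len.
Qed.

Lemma size_split (B : list (list (X * nat))) :
  size (concat (rev B)) = size (concat (rev (map (@tl _) B))) + size (concat (rev (map (firstn 1) B))).
Proof.
  induction B as [|b B IH]; auto. rewrite !map_cons, !cr, !size_app, IH.
  destruct b as [|q b]; unfold size; simpl; [lia|]. destruct (snd q =? 0); simpl; lia.
Qed.

Lemma len_read_split t : length (read t) = length (read (map (@tl X) t)) + length (hds t).
Proof.
  induction t as [|r t IH]; auto. unfold hds in *.
  rewrite (map_cons (@tl X) r t), (map_cons (firstn 1) r t), !read_cons, cr, !length_app, IH.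
  destruct r; simpl; lia.
Qed.

Lemma len_read_zero t : length (hds t) = 0 -> length (read t) = 0.
Proof.
  induction t as [|r t IH]; auto. unfold hds in *. rewrite (map_cons (firstn 1) r t), cr, read_cons, !length_app.
  intros H; destruct r; [rewrite IH; simpl in *; lia | simpl in *; lia].
Qed.

Lemma D2 n : forall t, length (read t) <= n -> valid t -> forall lw, map fst lw = read t -> good lw ->
  size lw <= partsum k (map (@length X) t).
Proof.
  induction n as [|n IH]; intros t Hn Hv lw Hm Hg.
  - assert (length lw = 0) by (rewrite <- (length_map fst), Hm; lia).
    pose proof (size_le_len lw). lia.
  - destruct (Nat.eq_dec (length (hds t)) 0) as [Z|NZ].
    + assert (length lw = 0) by (rewrite <- (length_map fst), Hm, len_read_zero; auto).
      pose proof (size_le_len lw). lia.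
    + destruct (blocks t lw Hm) as (B & HB & ->).
      rewrite size_split.
      assert (E : map (@length X) t = map (fun r => length (tl r) + length (firstn 1 r)) t).
      { apply map_ext. intros [|a r]; simpl; lia. }
      rewrite E, partsum_add, partsum_heads by auto.
      apply Nat.add_le_mono.
      * rewrite <- (map_map (@tl X) (@length X)). apply IH.
        -- pose proof (len_read_split t). lia.
        -- apply valid_tl; auto.
        -- unfold read. rewrite map_cr, <- HB, !map_map. apply (f_equal (fun L => concat (rev L))).
           apply map_ext. intros; apply map_tl.
        -- destruct Hg as [G1 G2]. split.
           ++ eapply sub_pw; [apply sub_cr, sub_tl|exact G1].
           ++ rewrite Forall_forall in *. intros x Hx. apply G2. eapply sub_incl; [apply sub_cr, sub_tl|exact Hx].
      * apply heads_bound; auto.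
        -- unfold hds. rewrite map_cr, <- HB, !map_map. apply (f_equal (fun L => concat (rev L))).
           apply map_ext. intros; symmetry; apply firstn_map.
        -- destruct Hg as [G1 G2]. split.
           ++ eapply sub_pw; [apply sub_cr, sub_first|exact G1].
           ++ rewrite Forall_forall in *. intros x Hx. apply G2. eapply sub_incl; [apply sub_cr, sub_first|exact Hx].
Qed.

End D2.


Section SLO.
Variable X : Type.
Variable lt : X -> X -> bool.
Variable strict : X -> bool.
Hypothesis H : strict_linear_order lt.

Lemma Rchar a b : Rl X lt strict a b <-> lt a b = true \/ (a = b /\ strict b = true).
Proof.
  destruct H as (Hirr & Htr & Htot). unfold Rl, bumps.
  destruct (strict b) eqn:Sb.
  - split.
    + intros E. destruct (classic (a = b)) as [->|Nab]; auto.
      destruct (Htot a b Nab) as [|E2]; auto. congruence.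
    + intros [E|[-> _]]; [|apply Hirr]. destruct (lt b a) eqn:E2; auto.
      specialize (Htr a b a E E2). rewrite Hirr in Htr. congruence.
  - destruct (lt a b); simpl; intuition congruence.
Qed.

Lemma slo_Rtr a b c : Rl X lt strict a b -> Rl X lt strict b c -> Rl X lt strict a c.
Proof.
  destruct H as (Hirr & Htr & Htot). rewrite !Rchar.
  intros [E1|[-> S1]] [E2|[-> S2]]; eauto.
Qed.

Lemma slo_nRtr a b c : ~ Rl X lt strict a b -> ~ Rl X lt strict b c -> ~ Rl X lt strict a c.
Proof.
  pose proof H as (Hirr & Htr & Htot). rewrite !Rchar.
  intros N1 N2 [E|[Eac S]].
  - destruct (classic (a = b)) as [<-|Nab].
    + apply N2; auto.
    + destruct (Htot a b Nab) as [E1|E1]; [apply N1; auto|].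
      destruct (classic (b = c)) as [<-|Nbc].
      * assert (E4 := Htr _ _ _ E E1). rewrite Hirr in E4; congruence.
      * destruct (Htot b c Nbc) as [E2|E2]; [apply N2; auto|].
        assert (E3 := Htr _ _ _ E2 E1). assert (E4 := Htr _ _ _ E E3). rewrite Hirr in E4; congruence.
  - subst c. destruct (classic (a = b)) as [<-|Nab]; [apply N1; auto|].
    destruct (Htot a b Nab) as [E1|E1]; [apply N1; auto|]. apply N2; auto.
Qed.
End SLO.


Section Comm.
Variables Y Z : Type.
Variable f : Y -> Z.
Variable ltZ : Z -> Z -> bool.
Variable sZ : Z -> bool.
Definition ltY (a b : Y) := ltZ (f a) (f b).
Definition sY (a : Y) := sZ (f a).

Lemma row_ins_comm x r : row_ins Z ltZ sZ (f x) (map f r) =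
  (option_map f (fst (row_ins Y ltY sY x r)), map f (snd (row_ins Y ltY sY x r))).
Proof.
  induction r as [|e r IH]; simpl; auto.
  destruct (row_ins Y ltY sY x r) as [o l] eqn:E. simpl in IH. rewrite IH.
  change (bumps Z ltZ sZ (f x) (f e)) with (bumps Y ltY sY x e).
  destruct (bumps Y ltY sY x e); simpl; auto.
Qed.

Lemma tab_ins_comm x t : tab_ins Z ltZ sZ (f x) (map (map f) t) = map (map f) (tab_ins Y ltY sY x t).
Proof.
  revert x; induction t as [|r t IH]; intros x; simpl; auto.
  rewrite row_ins_comm. destruct (row_ins Y ltY sY x r) as [[y|] r']; simpl; auto. rewrite IH; auto.
Qed.

Lemma shape_comm w : shape ltZ sZ (map f w) = shape ltY sY w.
Proof.
  unfold shape, RSK.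
  assert (Hg : forall t, fold_left (fun t x => tab_ins Z ltZ sZ x t) (map f w) (map (map f) t)
                 = map (map f) (fold_left (fun t x => tab_ins Y ltY sY x t) w t)).
  { induction w as [|x w IH]; intros t; simpl; auto. rewrite tab_ins_comm; auto. }
  specialize (Hg []). simpl in Hg. rewrite Hg, map_map. apply map_ext. intros; apply length_map.
Qed.
End Comm.

Lemma Gr_map X lt strict Y lt' strict' (phi : X -> Y)
  (Hphi : forall a b, Rl X lt strict a b -> Rl Y lt' strict' (phi a) (phi b)) k w s :
  Gr X lt strict k w s -> Gr Y lt' strict' k (map phi w) s.
Proof.
  intros (lw & Hm & [G1 G2] & Hs). exists (map (fun p => (phi (fst p), snd p)) lw).
  split; [rewrite map_map, <- Hm, map_map; auto|]. split; [split|].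
  - eapply pw_map; [|exact G1]. unfold Plab; simpl. auto.
  - apply Forall_map. eapply Forall_impl; [|exact G2]. simpl; auto.
  - rewrite size_labs, map_map. simpl. rewrite <- size_labs. auto.
Qed.

Theorem gen_main X lt strict Y lt' strict'
  (H1 : strict_linear_order lt) (H2 : strict_linear_order lt') (phi : X -> Y)
  (Hphi : forall a b, Rl X lt strict a b -> Rl Y lt' strict' (phi a) (phi b)) k w :
  partsum k (shape lt strict w) <= partsum k (shape lt' strict' (map phi w)).
Proof.
  assert (Rt1 := slo_Rtr X lt strict H1). assert (nR1 := slo_nRtr X lt strict H1).
  assert (Rt2 := slo_Rtr Y lt' strict' H2). assert (nR2 := slo_nRtr Y lt' strict' H2).
  assert (A := D1 X lt strict k _ (valid_RSK X lt strict Rt1 nR1 w)).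
  apply (proj1 (keq_Gr X lt strict Rt1 nR1 k _ _ (read_RSK X lt strict Rt1 nR1 w))) in A.
  apply (Gr_map _ _ _ Y lt' strict' phi Hphi) in A.
  apply (proj2 (keq_Gr Y lt' strict' Rt2 nR2 k _ _ (read_RSK Y lt' strict' Rt2 nR2 (map phi w)))) in A.
  destruct A as (lw & Hm & Hg & Hs). unfold shape at 1.
  eapply Nat.le_trans; [exact Hs|].
  eapply D2; eauto. apply valid_RSK; auto.
Qed.


Lemma decb_eq (P : Prop) (b : bool) : (P <-> b = true) -> decb P = b.
Proof.
  intros H. unfold decb. destruct (excluded_middle_informative P) as [HP|HP].
  - symmetry; apply H; auto.
  - destruct b; auto. exfalso; apply HP, H; auto.
Qed.

Section Inst.
Variable p : letter -> letter -> bool.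
Variable I : letter -> bool.
Hypothesis Hp : strict_linear_order p.
Hypothesis HI : is_interval p I.
Variable c0 : letter.
Hypothesis Hc0 : I c0 = true.

Definition Dst (o : option letter) : Prop := match o with None => True | Some a => I a = false end.
Definition Yt := {o : option letter | Dst o}.
Definition gY (y : Yt) : letter := match proj1_sig y with None => c0 | Some a => a end.

Lemma above b : I b = false -> ((exists c, I c = true /\ p c b = true) <-> p c0 b = true).
Proof.
  destruct Hp as (Hirr & Htr & Htot). intros Hb. split; [|intros; exists c0; auto].
  intros (c & Hc & Hcb). destruct (classic (c0 = b)) as [<-|N]; [congruence|].
  destruct (Htot c0 b N) as [|E]; auto. rewrite (HI c b c0 Hc Hc0 Hcb E) in Hb. discriminate.
Qed.

Lemma below' a : I a = false -> ((exists c, I c = true /\ p a c = true) <-> p a c0 = true).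
Proof.
  destruct Hp as (Hirr & Htr & Htot). intros Ha. split; [|intros; exists c0; auto].
  intros (c & Hc & Hac). destruct (classic (a = c0)) as [->|N]; [congruence|].
  destruct (Htot a c0 N) as [|E]; auto. rewrite (HI c0 a c Hc0 Hc E Hac) in Ha. discriminate.
Qed.

Lemma keyY (y z : Yt) : star_lt p I (proj1_sig y) (proj1_sig z) = p (gY y) (gY z).
Proof.
  destruct Hp as (Hirr & Htr & Htot).
  destruct y as [[a|] Ha], z as [[b|] Hb]; unfold gY; simpl in *; auto.
  - apply decb_eq, below'; auto.
  - apply decb_eq, above; auto.
Qed.

Lemma gY_inj (y z : Yt) : gY y = gY z -> y = z.
Proof.
  destruct y as [[a|] Ha], z as [[b|] Hb]; unfold gY; simpl in *; intros E.
  - subst. f_equal. apply UIP_dec, bool_dec.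
  - subst. congruence.
  - subst. congruence.
  - destruct Ha, Hb; auto.
Qed.

Definition ltY' := ltY Yt (option letter) (@proj1_sig _ _) (star_lt p I).
Definition sY' := sY Yt (option letter) (@proj1_sig _ _) star_strict.

Lemma slo_Y : strict_linear_order ltY'.
Proof.
  destruct Hp as (Hirr & Htr & Htot). unfold ltY', ltY.
  split; [|split]; intros; rewrite ?keyY in *; eauto.
  destruct (Htot (gY a) (gY b)) as [E|E]; auto.
  intros E; apply H, gY_inj; auto.
Qed.

Lemma dst_star a : Dst (if I a then None else Some a).
Proof. destruct (I a) eqn:E; simpl; auto. Qed.

Definition phiY (a : letter) : Yt := exist _ _ (dst_star a).

Lemma gphi a : gY (phiY a) = if I a then c0 else a.
Proof. unfold gY, phiY; simpl. destruct (I a); auto. Qed.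
Lemma sphi a : star_strict (proj1_sig (phiY a)) = if I a then true else isLe a.
Proof. unfold phiY; simpl. destruct (I a); auto. Qed.

Lemma Hphi a b : Rl letter p isLe a b -> Rl Yt ltY' sY' (phiY a) (phiY b).
Proof.
  rewrite (Rchar _ _ _ Hp), (Rchar _ _ _ slo_Y). unfold ltY', ltY, sY', sY. rewrite keyY, !gphi, sphi.
  destruct Hp as (Hirr & Htr & Htot).
  destruct (I a) eqn:Ia, (I b) eqn:Ib.
  - intros _. right. split; auto. apply gY_inj. rewrite !gphi, Ia, Ib; auto.
  - intros [E|[-> _]]; [|congruence]. left. apply above; eauto.
  - intros [E|[-> _]]; [|congruence]. left. apply below'; eauto.
  - intros [E|[-> S]]; auto.
Qed.

End Inst.

Theorem lemma2 (p : letter -> letter -> bool) (I : letter -> bool)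
  (Hp : admissible p) (HI : is_interval p I) (HIne : exists a, I a = true)
  (w : list letter) (k : nat) (Hk : (1 <= k)%nat) :
  (partsum k (shape p isLe w)
     <= partsum k (shape (star_lt p I) star_strict (star_word I w)))%nat.
Proof.
  destruct Hp as [Hs _]. destruct HIne as [c0 Hc0].
  assert (E : star_word I w = map (@proj1_sig _ _) (map (phiY I) w)).
  { unfold star_word. rewrite map_map. auto. }
  rewrite E, shape_comm.
  apply (gen_main _ p isLe _ (ltY' p I) (sY' I) Hs (slo_Y p I Hs HI c0 Hc0)).
  eapply Hphi; eauto.
Qed.
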